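(* Let $X,X'$ and $Y$ be nonempty sets and let $F\colon X^*\to Y$ be a standard and preassociative function. Let $g\colon X'\to X$ be any function and let $\mathbf{a}\in Y\setminus\mathrm{ran}(F^{\flat})$. Define $H\colon X'^*\to Y$ by $H(\varepsilon)=\mathbf{a}$ and $H_n(x_1,\ldots,x_n)=F_n(g(x_1),\ldots,g(x_n))$ for every integer $n\geqslant 1$. Then $H$ is standard and preassociative.
   Context: For a nonempty set $Z$, $Z^*=\bigcup_{n\geqslant 0}Z^n$ is the set of all finite tuples over $Z$, with $Z^0=\{\varepsilon\}$, $\varepsilon$ the empty tuple. For tuples $\mathbf{x},\mathbf{y}$, $F(\mathbf{x},\mathbf{y})$ denotes $F$ applied to the concatenation of $\mathbf{x}$ and $\mathbf{y}$ (and similarly for more tuples); concatenation with $\varepsilon$ leaves a tuple unchanged. For $F\colon Z^*\to Y$, $F_n=F|_{Z^n}$ and $F^{\flat}=F|_{Z^*\setminus\{\varepsilon\}}$. $F$ is standard if $F(\mathbf{x})=F(\varepsilon)$ holds only if $\mathbf{x}=\varepsilon$. $F$ is preassociative if for all $\mathbf{x},\mathbf{y},\mathbf{y}',\mathbf{z}\in Z^*$, $F(\mathbf{y})=F(\mathbf{y}')$ implies $F(\mathbf{x},\mathbf{y},\mathbf{z})=F(\mathbf{x},\mathbf{y}',\mathbf{z})$. *)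

(* Defs.v *)
From Stdlib Require Import List.
Import ListNotations.

Definition standard {Z Y : Type} (F : list Z -> Y) : Prop :=
  forall x : list Z, F x = F [] -> x = [].

Definition preassociative {Z Y : Type} (F : list Z -> Y) : Prop :=
  forall x y y' z : list Z, F y = F y' -> F (x ++ y ++ z) = F (x ++ y' ++ z).

Definition in_ran_flat {Z Y : Type} (F : list Z -> Y) (a : Y) : Prop :=
  exists x : list Z, x <> [] /\ F x = a.

Definition Hfun {X X' Y : Type} (F : list X -> Y) (g : X' -> X) (a : Y)
  (x : list X') : Y :=
  match x with
  | [] => a
  | _ :: _ => F (map g x)
  end.

(* Main.v *)
Require Import Defs.
From Stdlib Require Import List.
Import ListNotations.

Lemma Hfun_cons {X X' Y : Type} (F : list X -> Y) (g : X' -> X) (a : Y) (x : list X') :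
  x <> [] -> Hfun F g a x = F (map g x).
Proof. destruct x; simpl; congruence. Qed.

Theorem proposition3p4 (X X' Y : Type)
  (hX : inhabited X) (hX' : inhabited X') (hY : inhabited Y)
  (F : list X -> Y) (hstd : standard F) (hpre : preassociative F)
  (g : X' -> X) (a : Y) (ha : ~ in_ran_flat F a) :
  standard (Hfun F g a) /\ preassociative (Hfun F g a).
Proof.
  split.
  - intros x H. destruct x as [|u x]; [reflexivity|].
    exfalso. apply ha. exists (map g (u :: x)). split; [discriminate|]. exact H.
  - intros x y y' z H.
    destruct y as [|u y]; destruct y' as [|u' y']; simpl in H.
    + reflexivity.
    + exfalso. apply ha. exists (g u' :: map g y'). split; [discriminate|]. auto.
    + exfalso. apply ha. exists (g u :: map g y). split; [discriminate|]. auto.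
    + rewrite !Hfun_cons.
      * rewrite !map_app. apply hpre. exact H.
      * destruct x; simpl; discriminate.
      * destruct x; simpl; discriminate.
Qed.
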